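(* Let $\Omega=(a_1,b_1)\times\cdots\times(a_n,b_n)\subset\mathbb{R}^n$ be a bounded box with admissible mesh size vector $h$. (i) The first eigenvalue of $-\Delta_h$ on $\Omega_h$ with zero Dirichlet boundary conditions on $\partial\Omega_h$ is simple and equals $$\lambda_{1,h}=\sum_{i=1}^n\frac{4}{h_i^2}\sin^2\Big(\frac{\pi h_i}{2(b_i-a_i)}\Big)<\sum_{i=1}^n\frac{\pi^2}{(b_i-a_i)^2}=:\lambda_1,$$ with eigenfunction $\phi_{1,h}(x)=\prod_{i=1}^n\sin\frac{\pi(x_i-a_i)}{b_i-a_i}>0$ for $x\in\Omega_h$. (ii) Let $t>0$ be such that $\sum_{x\in\Omega_h}t\,\phi_{1,h}(x)\,\mathbf{h}=1$. Then $t\,\phi_{1,h}(x)\ge\frac{2^n}{|\Omega|^2}\operatorname{dist}(x,\partial\Omega_h)^n$ for all $x\in\Omega_h$.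
   Context: Admissible mesh: $h=(h_1,\dots,h_n)$, $h_i>0$, $a_i=k_ih_i$, $b_i=l_ih_i$, $k_i,l_i\in\mathbb{Z}$, $l_i-k_i>1$. $\mathbb{R}^n_h=\{(h_1z_1,\dots,h_nz_n):z_i\in\mathbb{Z}\}$, $\Omega_h=\Omega\cap\mathbb{R}^n_h$, $\partial\Omega_h=\partial\Omega\cap\mathbb{R}^n_h$, $\mathbf{h}=h_1\cdots h_n$, $|\Omega|=\prod_i(b_i-a_i)$. $\Delta_hu(x)=\sum_i\frac{u(x+h_ie_i)-2u(x)+u(x-h_ie_i)}{h_i^2}$. $\operatorname{dist}(x,\partial\Omega_h)$ is the Euclidean distance from $x$ to the set $\partial\Omega_h$. *)

(* Defs.v *)
From HB Require Import structures.
From mathcomp Require Import all_boot all_order all_algebra.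
From mathcomp Require Import all_classical all_reals all_analysis.
Set Implicit Arguments. Unset Strict Implicit. Unset Printing Implicit Defensive.
Import Order.TTheory GRing.Theory Num.Theory.
Local Open Scope ring_scope.
Local Open Scope classical_set_scope.

Section Grid.
Variables (R : realType) (n : nat) (h a b : 'I_n -> R).

Definition point := {ffun 'I_n -> R}.

Definition shift (x : point) (i : 'I_n) (s : R) : point :=
  [ffun j => x j + (if j == i then s else 0)].

Definition in_lattice (x : point) : Prop :=
  forall i, exists z : int, x i = z%:~R * h i.

Definition Omega_h : set point :=
  [set x | in_lattice x /\ forall i, a i < x i < b i].

Definition bdry_h : set point :=
  [set x | in_lattice x /\ (forall i, a i <= x i <= b i) /\
           exists i, x i = a i \/ x i = b i].

Definition lap_h (u : point -> R) (x : point) : R :=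
  \sum_(i < n) (u (shift x i (h i)) - 2 * u x + u (shift x i (- h i))) / h i ^+ 2.

Definition dirichlet_eigenpair (lam : R) (u : point -> R) : Prop :=
  (forall x, Omega_h x -> - lap_h u x = lam * u x) /\
  (forall x, bdry_h x -> u x = 0) /\
  (exists x, Omega_h x /\ u x != 0).

Definition lambda1h : R :=
  \sum_(i < n) 4 / h i ^+ 2 * sin (pi * h i / (2 * (b i - a i))) ^+ 2.

Definition lambda1 : R := \sum_(i < n) pi ^+ 2 / (b i - a i) ^+ 2.

Definition phi1h (x : point) : R :=
  \prod_(i < n) sin (pi * (x i - a i) / (b i - a i)).

Definition hvol : R := \prod_(i < n) h i.
Definition box_vol : R := \prod_(i < n) (b i - a i).

Definition eucl_dist (x y : point) : R := Num.sqrt (\sum_(i < n) (x i - y i) ^+ 2).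

Definition dist_bdry (x : point) : R :=
  inf [set d | exists2 y, bdry_h y & d = eucl_dist x y].

End Grid.

(* Main.v *)
Require Import Defs.
Require Import Defs.
From HB Require Import structures.
From mathcomp Require Import all_boot all_order all_algebra.
From mathcomp Require Import all_classical all_reals all_analysis.
From mathcomp Require Import ring lra zify.
Import numFieldNormedType.Exports.
Require Import Defs.
Import Order.TTheory GRing.Theory Num.Theory.
Local Open Scope ring_scope.
Local Open Scope classical_set_scope.

Section Trig.
Context {R : realType}.

Lemma sin_mvt {x y : R} : x < y -> exists2 c, x < c < y & sin y - sin x = cos c * (y - x).
Proof.
move=> xy.
have [] := @MVT R sin cos _ _ xy (fun c _ => is_derive_sin c).
  exact/continuous_subspaceT/continuous_sin.
move=> c cin E.
by exists c => //; move: cin; rewrite in_itv.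
Qed.

Lemma sin_le_id (y : R) : 0 <= y -> sin y <= y.
Proof.
rewrite le_eqVlt => /predU1P[<-|y0]; first by rewrite sin0.
have [c /andP[c0 cy]] := sin_mvt y0; rewrite sin0 !subr0 => ->.
by rewrite ler_piMl // ?cos_le1 // ltW.
Qed.

Lemma sin_lt_id (y : R) : 0 < y -> sin y < y.
Proof.
move=> y0; have [y2|y2] := ltP 2 y.
  by apply: le_lt_trans (sin_le1 _) _; apply: lt_trans y2; rewrite ltr1n.
have [c /andP[c0 cy]] := sin_mvt y0; rewrite sin0 !subr0 => ->.
rewrite gtr_pMl //; rewrite lt_neqAle cos_le1 andbT.
apply/negP => /eqP c1.
have : sin c == 0 by rewrite -norm_cos_eq1 c1 normr1.
by rewrite gt_eqF // sin2_gt0 // c0 (lt_le_trans cy y2).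
Qed.

Lemma jordan (y : R) : 0 <= y <= pi / 2 -> 2 * y / pi <= sin y.
Proof.
move=> /andP[y0 yp].
have pi0 : 0 < pi :> R := pi_gt0 R.
have key (p : R) : p != 0 -> 2 * (p / 2) / p = 1 by move=> p0; field.
have key2 (p z : R) : p != 0 -> 2 / p * (p / 2 - z) = 1 - 2 * z / p.
  by move=> p0; field.
move: y0; rewrite le_eqVlt => /predU1P[<-|y0]; first by rewrite sin0 mulr0 mul0r.
move: yp; rewrite le_eqVlt => /predU1P[->|yp].
  by rewrite sin_pihalf key // gt_eqF.
rewrite leNgt; apply/negP => H.
have [c1 /andP[c10 c1y]] := sin_mvt y0; rewrite sin0 !subr0 => E1.
have [c2 /andP[c2y c2p]] := sin_mvt yp; rewrite sin_pihalf => E2.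
have h1 : cos c1 < 2 / pi.
  by rewrite -(ltr_pM2r y0) -E1 mulrAC.
have h2 : 2 / pi < cos c2.
  have d0 : 0 < pi / 2 - y by rewrite subr_gt0.
  rewrite -(ltr_pM2r d0) -E2 key2 ?gt_eqF //.
  by rewrite ltrD2l ltrN2.
have pp : pi / 2 <= pi :> R.
  have hp (p : R) : 0 < p -> p / 2 <= p by move=> ?; lra.
  exact: hp.
have : cos c2 < cos c1.
  rewrite ltr_cos ?in_itv /= ?(lt_trans c1y c2y) //.
  - by rewrite (ltW c10) (le_trans (ltW (lt_trans c1y yp)) pp).
  - by rewrite (ltW (lt_trans c10 (lt_trans c1y c2y))) (le_trans (ltW c2p) pp).
by move=> h; have := lt_trans h2 (lt_trans h h1); rewrite ltxx.
Qed.


Lemma sin_piB x : sin (pi - x) = sin x :> R.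
Proof. by rewrite sinB sinpi cospi mul0r mulN1r sub0r opprK. Qed.

Lemma sin_lb_half (D s L : R) : 0 < L -> 0 <= D -> D <= s -> s <= L / 2 ->
  2 * D / L <= sin (pi * s / L).
Proof.
move=> L0 D0 Ds sL; have p0 : 0 < pi :> R := pi_gt0 R.
have s0 : 0 <= s := le_trans D0 Ds.
have H1 : 2 * (pi * s / L) / pi = 2 * s / L.
  have hh (p : R) : p != 0 -> L != 0 -> 2 * (p * s / L) / p = 2 * s / L.
    by move=> pn Ln; field; rewrite pn Ln.
  by apply: hh; rewrite lt0r_neq0.
have J : 0 <= pi * s / L <= pi / 2.
  apply/andP; split; first exact: divr_ge0 (mulr_ge0 (ltW p0) s0) (ltW L0).
  rewrite -mulrA ler_pM2l // ler_pdivrMr //.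
  have hh (q : R) : s <= q / 2 -> s <= 2^-1 * q by move=> ?; lra.
  exact: hh.
apply: (le_trans _ (jordan _ J)).
by rewrite H1 ler_pM2r ?invr_gt0 // ler_pM2l.
Qed.

Lemma sin_lb (D s L : R) : 0 < L -> 0 <= D -> D <= s -> D <= L - s ->
  2 * D / L <= sin (pi * s / L).
Proof.
move=> L0 D0 Ds DL.
have [sL|sL] := leP s (L / 2); first exact: sin_lb_half.
have E : pi * s / L = pi - pi * (L - s) / L.
  have hh (p : R) : L != 0 -> p * s / L = p - p * (L - s) / L.
    by move=> Ln; field; rewrite Ln.
  by apply: hh; rewrite lt0r_neq0.
rewrite E sin_piB; apply: sin_lb_half => //.
  have hh (q : R) : L / 2 < s -> L - s <= q / 2 -> L - s <= L / 2 by move=> *; lra.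
  by move: sL DL Ds => *; lra.
Qed.

End Trig.

Section Main.
Context (R : realType) (n : nat) (h a b : 'I_n -> R) (k l : 'I_n -> int).
Hypothesis hpos : forall i, 0 < h i.
Hypothesis ha : forall i, a i = (k i)%:~R * h i.
Hypothesis hb : forall i, b i = (l i)%:~R * h i.
Hypothesis hkl : forall i, 1 < l i - k i.

Lemma L_eq i : b i - a i = (l i - k i)%:~R * h i.
Proof. by rewrite ha hb -mulrBl -intrB. Qed.

Lemma L_gt0 i : 0 < b i - a i.
Proof.
rewrite L_eq mulr_gt0 // ltr0z; have := hkl i; lia.
Qed.

Lemma lat_lt (z w : int) i : (z%:~R * h i < w%:~R * h i) = (z < w).
Proof. by rewrite ltr_pM2r // ltr_int. Qed.

Lemma lat_le (z w : int) i : (z%:~R * h i <= w%:~R * h i) = (z <= w).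
Proof. by rewrite ler_pM2r // ler_int. Qed.

Lemma clos_char (x : {ffun 'I_n -> R}) :
  (in_lattice h x /\ forall i, a i <= x i <= b i) ->
  (Omega_h h a b `|` bdry_h h a b) x.
Proof.
move=> [lx bx].
case: (boolP [forall i, (a i < x i) && (x i < b i)]) => [/forallP H|].
  by left; split.
rewrite negb_forall => /existsP[i]; rewrite negb_and -!leNgt => Hi.
right; split => //; split => //; exists i.
have /andP[h1 h2] := bx i.
case/orP: Hi => Hi; [left|right]; apply/eqP; rewrite eq_le ?h1 ?h2 ?Hi //.
Qed.

Lemma Omega_lat x i : Omega_h h a b x ->
  exists z : int, x i = z%:~R * h i /\ k i < z < l i.
Proof.
move=> [lx bx]; have [z zE] := lx i; exists z; split => //.
by have := bx i; rewrite zE ha hb !lat_lt.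
Qed.

Lemma shift_nbr x i (s : R) : Omega_h h a b x -> (s = h i \/ s = - h i) ->
  (Omega_h h a b `|` bdry_h h a b) (shift x i s).
Proof.
move=> Ox hs; apply: clos_char; split.
  move=> j; rewrite ffunE; have [z [zE _]] := Omega_lat _ j Ox.
  case: (j =P i) => [ji|_]; last by exists z; rewrite zE addr0.
  subst j; case: hs => ->; [exists (z + 1) | exists (z - 1)]; rewrite zE.
    by rewrite rmorphD /= rmorph1 mulrDl mul1r.
  by rewrite rmorphB /= rmorph1 mulrBl mul1r.
move=> j; rewrite ffunE; have [z [zE zb]] := Omega_lat _ j Ox.
case: (j =P i) => [ji|_]; last first.
  by move: Ox => [_ /(_ j) /andP[h1 h2]]; rewrite addr0 !ltW.
subst j; rewrite zE ha hb; case: hs => ->.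
  rewrite -[X in _ + X]mul1r -mulrDl -[1]/(1%:~R) -intrD !lat_le; lia.
rewrite -[X in _ - X]mul1r -mulrBl -[1]/(1%:~R) -intrB !lat_le; lia.
Qed.


Definition Fs i (t : R) := sin (pi * (t - a i) / (b i - a i)).

Lemma phi_split (x : point R n) i :
  phi1h a b x = Fs i (x i) * \prod_(j < n | j != i) Fs j (x j).
Proof. by rewrite /phi1h (bigD1 i). Qed.

Lemma phi_shift (x : point R n) i s :
  phi1h a b (shift x i s) = Fs i (x i + s) * \prod_(j < n | j != i) Fs j (x j).
Proof.
rewrite (phi_split _ i) ffunE eqxx; congr (_ * _).
by apply: eq_bigr => j /negbTE ji; rewrite ffunE ji addr0.
Qed.

Lemma trig_key (t u : R) :
  sin (t + u *+ 2) - 2 * sin t + sin (t - u *+ 2) = - (4 * sin u ^+ 2) * sin t.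
Proof.
rewrite sinD sinB cos_mulr2n cos2sin2; ring.
Qed.

Lemma arg_shift (p x s a0 L : R) : L != 0 ->
  p * (x + s - a0) / L = p * (x - a0) / L + (p * s / (2 * L)) *+ 2.
Proof. by move=> L0; rewrite mulr2n; field. Qed.


Lemma arg_shiftN (p x s a0 L : R) : L != 0 ->
  p * (x + - s - a0) / L = p * (x - a0) / L - (p * s / (2 * L)) *+ 2.
Proof. by move=> L0; rewrite mulr2n; field. Qed.

Lemma lap_phi x : - lap_h h (phi1h a b) x = lambda1h h a b * phi1h a b x.
Proof.
rewrite /lap_h /lambda1h -sumrN mulr_suml; apply: eq_bigr => i _.
rewrite !phi_shift (phi_split x i) /Fs.
have L0 : b i - a i != 0 by rewrite gt_eqF // L_gt0.
have h0 : h i != 0 by rewrite gt_eqF.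
rewrite arg_shift // arg_shiftN //.
set t := pi * (x i - a i) / (b i - a i).
set u := pi * h i / (2 * (b i - a i)).
set P := \prod_(j < n | j != i) _.
have E : sin (t + u *+ 2) * P - 2 * (sin t * P) + sin (t - u *+ 2) * P =
  - (4 * sin u ^+ 2) * (sin t * P).
  rewrite (_ : - (4 * sin u ^+ 2) * (sin t * P) = (- (4 * sin u ^+ 2) * sin t) * P); last by ring.
  by rewrite -trig_key; ring.
rewrite E; field.
by [].
Qed.


Definition zc (y : point R n) i : int := Num.floor (y i / h i).

Lemma zcE y i : in_lattice h y -> y i = (zc y i)%:~R * h i.
Proof.
move=> /(_ i)[z E]; rewrite /zc E mulfK ?gt_eqF // intrKfloor //.
Qed.

Lemma Omega_zc y i : Omega_h h a b y -> k i < zc y i < l i.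
Proof.
move=> [ly by_]; have := by_ i; rewrite (zcE _ i ly) ha hb !lat_lt //.
Qed.

Definition m i : nat := `|l i - k i|%N.
Definition M : nat := (\max_i m i).+1.

Lemma m_lt i : (m i < M)%N.
Proof. by rewrite ltnS leq_bigmax. Qed.

Lemma mZ i : (m i)%:Z = l i - k i.
Proof. rewrite /m; have := hkl i; lia. Qed.

Definition enc (f : {ffun 'I_n -> 'I_M}) : point R n :=
  [ffun i => (k i + (f i : nat)%:Z)%:~R * h i].

Definition S : {set {ffun 'I_n -> 'I_M}} :=
  [set f : {ffun 'I_n -> 'I_M} | [forall i, (0 < f i)%N && (f i < m i)%N]].

Lemma enc_inj : injective enc.
Proof.
move=> f g /ffunP E; apply/ffunP => i; have := E i; rewrite !ffunE.
move/(mulIf (lt0r_neq0 (hpos i)))/eqP; rewrite eqr_int => /eqP H.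
apply: val_inj => /=; lia.
Qed.

Lemma enc_Omega f : f \in S -> Omega_h h a b (enc f).
Proof.
rewrite inE => /forallP H; split.
  by move=> i; exists (k i + (f i : nat)%:Z); rewrite ffunE.
move=> i; have /andP[h1 h2] := H i; rewrite ffunE ha hb !lat_lt.
have := mZ i; lia.
Qed.

Lemma Omega_enc x : Omega_h h a b x -> exists2 f, f \in S & x = enc f.
Proof.
move=> Ox; pose f : {ffun 'I_n -> 'I_M} := [ffun i => inord `|zc x i - k i|%N].
have fE i : (f i : nat) = `|zc x i - k i|%N.
  rewrite ffunE inordK //; apply: leq_ltn_trans (m_lt i).
  have := Omega_zc _ i Ox; rewrite /m; lia.
exists f.
  rewrite inE; apply/forallP => i; rewrite fE.
  have := Omega_zc _ i Ox; rewrite /m; lia.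
apply/ffunP => i; rewrite [RHS]ffunE fE (zcE _ i Ox.1); congr (_%:~R * _).
have := Omega_zc _ i Ox; lia.
Qed.


Definition pt (z : 'I_n -> int) : point R n := [ffun j => (z j)%:~R * h j].

Lemma pt_zc {y} : in_lattice h y -> pt (zc y) = y.
Proof. by move=> ly; apply/ffunP => j; rewrite ffunE -zcE. Qed.

Lemma zc_pt z j : zc (pt z) j = z j.
Proof. by rewrite /zc ffunE mulfK ?lt0r_neq0 // intrKfloor. Qed.

Lemma pt_Omega z : (forall j, k j < z j < l j) -> Omega_h h a b (pt z).
Proof.
move=> H; split; first by move=> j; exists (z j); rewrite ffunE.
by move=> j; rewrite ffunE ha hb !lat_lt.
Qed.

Lemma shift_pt z i (d : int) :
  shift (pt z) i (d%:~R * h i) = pt (fun j => if j == i then z j + d else z j).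
Proof.
apply/ffunP => j; rewrite !ffunE; case: (j =P i) => [->|]; last by rewrite addr0.
by rewrite rmorphD /= mulrDl.
Qed.

Lemma connectivity (Z : point R n -> Prop) x0 :
  Omega_h h a b x0 -> Z x0 ->
  (forall y i s, Omega_h h a b y -> Z y -> (s = h i \/ s = - h i) ->
     Omega_h h a b (shift y i s) -> Z (shift y i s)) ->
  forall y, Omega_h h a b y -> Z y.
Proof.
move=> O0 Z0 HZ.
suff H : forall N y, Omega_h h a b y ->
    (\sum_i `|zc y i - zc x0 i|)%N = N -> Z y.
  by move=> y Oy; exact: H _ y Oy erefl.
elim => [|N IH] y Oy HN.
  have : (\sum_i `|zc y i - zc x0 i| == 0)%N by rewrite HN.
  rewrite sum_nat_eq0 => /forallP H.
  suff -> : y = x0 by [].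
  rewrite -(pt_zc Oy.1) -(pt_zc O0.1); apply/ffunP => j; rewrite !ffunE.
  by have := H j; rewrite /= => /eqP E; congr (_%:~R * _); lia.
case: (boolP [exists i, zc y i != zc x0 i]); last first.
  rewrite negb_exists => /forallP H0.
  move: HN; rewrite big1 // => j _; have := H0 j; rewrite negbK => /eqP ->.
  by rewrite subrr.
case/existsP => i Hi.
pose d : int := if zc y i < zc x0 i then 1 else -1.
pose z' := fun j => if j == i then zc y j + d else zc y j.
have Hd : (d = 1 \/ d = -1) by rewrite /d; case: ifP; [left|right].
have O' : Omega_h h a b (pt z').
  apply: pt_Omega => j; rewrite /z'; case: (j =P i) => [->|_].
    have := Omega_zc _ i Oy; have := Omega_zc _ i O0; rewrite /d.
    by case: ifP => H1; lia.
  exact: Omega_zc _ j Oy.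
have Z' : Z (pt z').
  apply: (IH _ O'); rewrite (bigD1 i) //= in HN.
  rewrite (bigD1 i) //= zc_pt /z' eqxx.
  set s2 := (X in (_ + X)%N = N).
  set s1 := (X in (_ + X)%N = N.+1) in HN.
  have E12 : s2 = s1.
    rewrite /s1 /s2; apply: eq_bigr => j /negbTE ji.
    by rewrite zc_pt /z' ji.
  clearbody s1 s2.
  move: HN Hi; rewrite /d; case: ifP => H1 HN Hi; lia.
have E : y = shift (pt z') i ((- d)%:~R * h i).
  rewrite shift_pt -[LHS](pt_zc Oy.1); apply/ffunP => j; rewrite !ffunE /z'.
  by case: (j =P i) => // ->; rewrite addrK.
rewrite E; apply: HZ => //.
  case: Hd => ->; [right|left].
    by rewrite rmorphN /= rmorph1 mulN1r.
  by rewrite opprK rmorph1 mul1r.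
by rewrite -E.
Qed.

Lemma f1S : [ffun _ => inord 1] \in S.
Proof.
rewrite inE; apply/forallP => i; rewrite ffunE inordK.
  by have := mZ i; have := hkl i; lia.
by apply: leq_ltn_trans (m_lt i); have := mZ i; have := hkl i; lia.
Qed.

Lemma exists_max (F : point R n -> R) :
  exists2 x0, Omega_h h a b x0 & forall x, Omega_h h a b x -> F x <= F x0.
Proof.
case: (@arg_maxP _ _ _ _ (fun f => f \in S) (fun f => F (enc f)) f1S) => f0 f0S Hf0.
exists (enc f0); first exact: enc_Omega.
by move=> x /Omega_enc [f fS ->]; apply: Hf0.
Qed.


Lemma arg_range (s L : R) : 0 < L -> 0 < s < L -> 0 < pi * s / L < pi.
Proof.
move=> L0 /andP[s0 sL]; have p0 : 0 < pi :> R := pi_gt0 R.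
rewrite divr_gt0 ?mulr_gt0 //= ltr_pdivrMr // ltr_pM2l //.
Qed.

Lemma phi_pos x : Omega_h h a b x -> 0 < phi1h a b x.
Proof.
move=> [_ bx]; apply: prodr_gt0 => i _; apply: sin_gt0_pi.
have /andP[h1 h2] := bx i.
by apply: arg_range; rewrite ?L_gt0 // subr_gt0 h1 /= ltrD2r.
Qed.

Lemma phi_bdry x : bdry_h h a b x -> phi1h a b x = 0.
Proof.
move=> [_ [_ [i Hi]]]; rewrite (phi_split _ i) /Fs.
case: Hi => ->; first by rewrite subrr mulr0 mul0r sin0 mul0r.
by rewrite mulfK ?sinpi ?mul0r // lt0r_neq0 // L_gt0.
Qed.

Lemma lap_lin c (u v : point R n -> R) x :
  lap_h h (fun y => c * u y - v y) x = c * lap_h h u x - lap_h h v x.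
Proof.
rewrite /lap_h mulr_sumr -sumrB; apply: eq_bigr => i _; ring.
Qed.

Lemma lap_zero (v : point R n -> R) y : v y = 0 ->
  lap_h h v y = \sum_i (v (shift y i (h i)) + v (shift y i (- h i))) / h i ^+ 2.
Proof.
by move=> v0; apply: eq_bigr => i _; rewrite v0 mulr0 subr0.
Qed.

Lemma max_setup {lam u} : dirichlet_eigenpair h a b lam u ->
  exists c, exists2 x0, Omega_h h a b x0 &
   [/\ forall x, (Omega_h h a b `|` bdry_h h a b) x -> 0 <= c * phi1h a b x - u x,
       u x0 = c * phi1h a b x0 &
       forall x, Omega_h h a b x -> u x <= c * phi1h a b x].
Proof.
move=> [eq [bd _]].
have [x0 O0 Hm] := exists_max (fun x => u x / phi1h a b x).
exists (u x0 / phi1h a b x0), x0 => //.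
have Hle x : Omega_h h a b x -> u x <= u x0 / phi1h a b x0 * phi1h a b x.
  by move=> Ox; rewrite -ler_pdivrMr ?phi_pos //; apply: Hm.
split => //.
- move=> x [Ox|Bx]; first by rewrite subr_ge0 Hle.
  by rewrite (bd _ Bx) (phi_bdry _ Bx) mulr0 subr0.
- by rewrite divfK // lt0r_neq0 // phi_pos.
Qed.

Lemma nbr_ge0 {v : point R n -> R} {y} :
  (forall x, (Omega_h h a b `|` bdry_h h a b) x -> 0 <= v x) ->
  Omega_h h a b y -> forall i,
  0 <= v (shift y i (h i)) /\ 0 <= v (shift y i (- h i)).
Proof.
move=> H Oy i; split; apply: H; apply: shift_nbr => //; by [left|right].
Qed.

Lemma lower_bound lam u : dirichlet_eigenpair h a b lam u ->
  (exists x, Omega_h h a b x /\ 0 < u x) -> lambda1h h a b <= lam.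
Proof.
move=> E [xp [Op up]].
have [c [x0 O0 [vge0 ux0 ule]]] := max_setup E.
have c0 : 0 < c.
  have := lt_le_trans up (ule _ Op).
  by rewrite pmulr_lgt0 // phi_pos.
have u0 : 0 < u x0 by rewrite ux0 mulr_gt0 // phi_pos.
pose v := fun y => c * phi1h a b y - u y.
have v0 : v x0 = 0 by rewrite /v ux0 subrr.
have L1 : lap_h h v x0 = (lam - lambda1h h a b) * u x0.
  rewrite /v lap_lin.
  have := lap_phi x0; have := E.1 _ O0.
  rewrite ux0 => e1 e2; rewrite -[lap_h h u x0]opprK e1.
  rewrite -[lap_h h _ x0]opprK e2; ring.
have L2 : 0 <= lap_h h v x0.
  rewrite lap_zero //; apply: sumr_ge0 => i _; apply: divr_ge0.
    by have [h1 h2] := nbr_ge0 vge0 O0 i; exact: addr_ge0.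
  exact: sqr_ge0.
by move: L2; rewrite L1 pmulr_lge0 // subr_ge0.
Qed.


Lemma simplicity u : dirichlet_eigenpair h a b (lambda1h h a b) u ->
  exists c : R, forall x, (Omega_h h a b `|` bdry_h h a b) x ->
    u x = c * phi1h a b x.
Proof.
move=> E.
have [c [x0 O0 [vge0 ux0 ule]]] := max_setup E.
exists c.
pose v := fun y => c * phi1h a b y - u y.
have lapv y : Omega_h h a b y -> lap_h h v y = - lambda1h h a b * v y.
  move=> Oy; rewrite /v lap_lin.
  have := lap_phi y; have := E.1 _ Oy => e1 e2.
  rewrite -[lap_h h u y]opprK e1 -[lap_h h _ y]opprK e2; ring.
have Z : forall y, Omega_h h a b y -> v y = 0.
  apply: (@connectivity (fun y => v y = 0) _ O0); first by rewrite /v ux0 subrr.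
  move=> y i s Oy vy hs _.
  have := lapv y Oy; rewrite vy mulr0 lap_zero // => S0.
  have Hnn : forall j : 'I_n, true ->
      0 <= (v (shift y j (h j)) + v (shift y j (- h j))) / h j ^+ 2.
    move=> j _; have [g1 g2] := nbr_ge0 vge0 Oy j.
    by apply: divr_ge0; [exact: addr_ge0 | exact: sqr_ge0].
  have := psumr_eq0P Hnn S0 => H0; have H := H0 i isT.
  have [h1 h2] := nbr_ge0 vge0 Oy i.
  have : v (shift y i (h i)) + v (shift y i (- h i)) = 0.
    apply/eqP; move/eqP: H.
    by rewrite mulf_eq0 invr_eq0 expf_eq0 (negbTE (lt0r_neq0 (hpos i))) andbF orbF.
  move/eqP; rewrite paddr_eq0 // => /andP[/eqP e1 /eqP e2].
  by case: hs => ->.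
move=> x [Ox|Bx].
  by apply/eqP; rewrite -subr_eq0 -opprB oppr_eq0; apply/eqP; exact: Z.
by rewrite (phi_bdry _ Bx) mulr0; exact: E.2.1.
Qed.


Lemma card_lt (N m0 : nat) : (#|[pred j : 'I_N | (j < m0)%N]| <= m0)%N.
Proof.
rewrite cardE -(size_map val) -[X in (_ <= X)%N](size_iota 0).
apply: uniq_leq_size; first by rewrite map_inj_uniq ?enum_uniq //; exact: val_inj.
move=> x /mapP[j]; rewrite mem_enum inE => jm ->; by rewrite mem_iota.
Qed.

Lemma card_S : (#|S| <= \prod_i m i)%N.
Proof.
pose F := fun (i : 'I_n) (j : 'I_M) => nat_of_bool ((j : nat) < m i)%N.
have E := bigA_distr_bigA (times := muln) (plus := addn) F.
apply: (@leq_trans (\prod_i \sum_(j : 'I_M) F i j)).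
  rewrite E -sum1_card big_mkcond /=.
  rewrite -[X in (_ <= X)%N]/(\sum_(f : {ffun 'I_n -> 'I_M}) \prod_i F i (f i))%N.
  apply: leq_sum => f _.
  case: ifP => // /[1!inE] /forallP H.
  by rewrite big1 // => i _; rewrite /F; have /andP[_ ->] := H i.
apply: leq_prod => i _; apply: leq_trans (card_lt M (m i)).
rewrite -[X in (X <= _)%N]/(\sum_(j : 'I_M) F i j)%N.
rewrite -sum1_card [X in (_ <= X)%N]big_mkcond /=; apply: leq_sum => j _.
by rewrite /F inE; case: ifP.
Qed.


Lemma phi_le1 x : phi1h a b x <= 1.
Proof.
apply: le_trans (ler_norm _) _; rewrite /phi1h normr_prod.
apply: (@le_trans _ _ (\prod_(i < n) (1 : R))); last by rewrite big1.
by apply: ler_prod => i _; rewrite normr_ge0 sin_max.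
Qed.

Lemma hvol_gt0 : 0 < hvol h.
Proof. by apply: prodr_gt0 => i _. Qed.

Lemma box_volE : box_vol a b = (\prod_i m i)%:R * hvol h.
Proof.
rewrite /box_vol /hvol natr_prod -big_split /=; apply: eq_bigr => i _.
by rewrite L_eq -mZ -pmulrn.
Qed.

Lemma Omega_img : Omega_h h a b = enc @` [set f | f \in S].
Proof.
apply/seteqP; split => x.
  by move=> /Omega_enc [f fS ->]; exists f.
by move=> [f fS <-]; apply: enc_Omega.
Qed.

Lemma sum_bound t : 0 < t ->
  \sum_(x \in Omega_h h a b) t * phi1h a b x * hvol h <= t * box_vol a b.
Proof.
move=> t0; rewrite Omega_img fsbig_image; last by move=> f g _ _; apply: enc_inj.
have -> : [set f | f \in S] = [set` enum S].
  by apply/seteqP; split => f; rewrite /= mem_enum.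
rewrite -fsbig_seq ?enum_uniq // big_enum /=.
apply: (@le_trans _ _ (\sum_(f in S) t * hvol h)).
  apply: ler_sum => f fS; rewrite ler_pM2r ?hvol_gt0 //.
  by rewrite -[X in _ <= X]mulr1 ler_pM2l // phi_le1.
rewrite sumr_const box_volE -[X in X <= _]mulr_natr -mulrA ler_pM2l //.
rewrite mulrC ler_pM2r ?hvol_gt0 // ler_nat.
exact: card_S.
Qed.


Lemma eucl_shift (x : point R n) i s : eucl_dist x (shift x i s) = `|s|.
Proof.
rewrite /eucl_dist (bigD1 i) //= big1 => [|j /negbTE ji]; last first.
  by rewrite ffunE ji addr0 subrr expr0n.
by rewrite addr0 ffunE eqxx opprD addNKr sqrrN sqrtr_sqr.
Qed.

Lemma dist_props x (i0 : 'I_n) : Omega_h h a b x ->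
  0 <= dist_bdry h a b x /\
  (forall i, dist_bdry h a b x <= x i - a i /\ dist_bdry h a b x <= b i - x i).
Proof.
move=> Ox.
set E := [set d | exists2 y, bdry_h h a b y & d = eucl_dist x y].
have lbE : lbound E 0 by move=> d [y _ ->]; apply: sqrtr_ge0.
have hE : has_lbound E by exists 0.
have bdA i : bdry_h h a b (shift x i (a i - x i)).
  split; last split.
  - move=> j; rewrite ffunE; case: (j =P i) => [->|_].
      by exists (k i); rewrite addrC subrK ha.
    by have [z [zE _]] := Omega_lat _ j Ox; exists z; rewrite addr0.
  - move=> j; rewrite ffunE; case: (j =P i) => [->|_].
      by rewrite addrC subrK lexx ltW // -subr_gt0 L_gt0.
    by have /andP[p q] := Ox.2 j; rewrite addr0 !ltW.
  - by exists i; left; rewrite ffunE eqxx addrC subrK.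
have bdB i : bdry_h h a b (shift x i (b i - x i)).
  split; last split.
  - move=> j; rewrite ffunE; case: (j =P i) => [->|_].
      by exists (l i); rewrite addrC subrK hb.
    by have [z [zE _]] := Omega_lat _ j Ox; exists z; rewrite addr0.
  - move=> j; rewrite ffunE; case: (j =P i) => [->|_].
      by rewrite addrC subrK lexx andbT ltW // -subr_gt0 L_gt0.
    by have /andP[p q] := Ox.2 j; rewrite addr0 !ltW.
  - by exists i; right; rewrite ffunE eqxx addrC subrK.
split.
  apply: lb_le_inf => //; exists (eucl_dist x (shift x i0 (a i0 - x i0))).
  by exists (shift x i0 (a i0 - x i0)).
move=> i; have /andP[p q] := Ox.2 i; split.
  have : E (eucl_dist x (shift x i (a i - x i))) by exists (shift x i (a i - x i)).
  move/(ge_inf hE); rewrite eucl_shift ler0_norm ?opprB //.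
  by rewrite subr_le0 ltW.
have : E (eucl_dist x (shift x i (b i - x i))) by exists (shift x i (b i - x i)).
move/(ge_inf hE); rewrite eucl_shift ger0_norm //.
by rewrite subr_ge0 ltW.
Qed.


Lemma lap_opp (u : point R n -> R) x :
  lap_h h (fun y => - u y) x = - lap_h h u x.
Proof. by rewrite /lap_h -sumrN; apply: eq_bigr => i _; ring. Qed.

Lemma term_lt i :
  4 / h i ^+ 2 * sin (pi * h i / (2 * (b i - a i))) ^+ 2 <
  pi ^+ 2 / (b i - a i) ^+ 2.
Proof.
have p0 : 0 < pi :> R := pi_gt0 R.
have L0 := L_gt0 i; have h0 := hpos i.
set u := pi * h i / (2 * (b i - a i)).
have u0 : 0 < u by rewrite divr_gt0 ?mulr_gt0.
have hL : h i <= b i - a i.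
  by rewrite L_eq ler_peMl ?ltW // ltr1z; have := hkl i; lia.
have upi : u <= pi.
  rewrite /u -mulrA ler_piMr ?ltW //.
  by rewrite ltr_pdivrMr ?mulr_gt0 // mul1r; lra.
have s0 : 0 <= sin u by apply: sin_ge0_pi; rewrite ltW.
have sl : sin u < u := sin_lt_id _ u0.
have sq : sin u ^+ 2 < u ^+ 2 by rewrite ltrXn2r.
apply: (@lt_le_trans _ _ (4 / h i ^+ 2 * u ^+ 2)).
  by rewrite ltr_pM2l // divr_gt0 // exprn_gt0.
have hh (p L hh : R) : L != 0 -> hh != 0 ->
    4 / hh ^+ 2 * (p * hh / (2 * L)) ^+ 2 = p ^+ 2 / L ^+ 2.
  by move=> Ln hn; field; rewrite Ln hn.
by rewrite /u hh // lt0r_neq0.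
Qed.

Lemma main_in : (0 < n)%N ->
  (lambda1h h a b < lambda1 a b /\
   dirichlet_eigenpair h a b (lambda1h h a b) (phi1h a b) /\
   (forall x, Omega_h h a b x -> 0 < phi1h a b x) /\
   (forall lam u, dirichlet_eigenpair h a b lam u -> lambda1h h a b <= lam) /\
   (forall u, dirichlet_eigenpair h a b (lambda1h h a b) u ->
      exists c : R, forall x, (Omega_h h a b `|` bdry_h h a b) x ->
        u x = c * phi1h a b x)) /\
  (forall t : R, 0 < t ->
     \sum_(x \in Omega_h h a b) t * phi1h a b x * hvol h = 1 ->
     forall x, Omega_h h a b x ->
       2 ^+ n / box_vol a b ^+ 2 * dist_bdry h a b x ^+ n <= t * phi1h a b x).
Proof.
move=> n0; pose i0 : 'I_n := Ordinal n0.
split; first (split; [|split; [|split; [|split]]]).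
- apply: ltr_sum; last by move=> i _; exact: term_lt.
  by apply/hasP; exists i0; rewrite ?mem_index_enum.
- split; first by move=> x _; exact: lap_phi.
  split; first by move=> x; exact: phi_bdry.
  exists (enc [ffun _ => inord 1]); split; first exact: enc_Omega f1S.
  by rewrite lt0r_neq0 // phi_pos //; apply: enc_Omega; exact: f1S.
- exact: phi_pos.
- move=> lam u E; have [x [Ox ux]] := E.2.2.
  have [un|up|ue] := ltrgtP (u x) 0; last by rewrite ue eqxx in ux.
    apply: (@lower_bound lam (fun y => - u y)).
      split; first by move=> y Oy; rewrite lap_opp opprK mulrN -E.1 // opprK.
      split; first by move=> y By; rewrite E.2.1 // oppr0.
      by exists x; split; rewrite // oppr_eq0.
    by exists x; split; rewrite // oppr_gt0.
  by apply: (lower_bound _ _ E); exists x.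
- exact: simplicity.
move=> t t0 H x Ox.
have [D0 Dle] := dist_props x i0 Ox.
set D := dist_bdry h a b x.
have tb : 1 <= t * box_vol a b by rewrite -H sum_bound.
have bv0 : 0 < box_vol a b by apply: prodr_gt0 => i _; exact: L_gt0.
have phib : 2 ^+ n * D ^+ n / box_vol a b <= phi1h a b x.
  have -> : 2 ^+ n * D ^+ n / box_vol a b = \prod_i (2 * D / (b i - a i)).
    rewrite prodf_div big_split /= /box_vol.
    by rewrite !prodr_const card_ord.
  apply: ler_prod => i _; have [d1 d2] := Dle i; apply/andP; split.
    by rewrite divr_ge0 ?mulr_ge0 // ltW // L_gt0.
  apply: sin_lb => //; first exact: L_gt0.
  by rewrite opprB addrA subrK.
have -> : 2 ^+ n / box_vol a b ^+ 2 * D ^+ n =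
    (box_vol a b)^-1 * (2 ^+ n * D ^+ n / box_vol a b).
  have hh (B P Q : R) : B != 0 -> P / B ^+ 2 * Q = B^-1 * (P * Q / B).
    by move=> Bn; field; rewrite Bn.
  by rewrite hh // lt0r_neq0.
apply: ler_pM => //.
- by rewrite invr_ge0 ltW.
- by rewrite divr_ge0 ?mulr_ge0 ?exprn_ge0 // ltW.
- by rewrite -div1r ler_pdivrMr // mulrC.
Qed.

End Main.

Theorem mainTheorem4 (R : realType) (n : nat) (h a b : 'I_n -> R)
    (k l : 'I_n -> int) :
  (0 < n)%N ->
  (forall i, 0 < h i) ->
  (forall i, a i = (k i)%:~R * h i) ->
  (forall i, b i = (l i)%:~R * h i) ->
  (forall i, 1 < l i - k i) ->
  (* (i) *)
  (lambda1h h a b < lambda1 a b /\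
   dirichlet_eigenpair h a b (lambda1h h a b) (phi1h a b) /\
   (forall x, Omega_h h a b x -> 0 < phi1h a b x) /\
   (* first eigenvalue: no eigenvalue below lambda1h *)
   (forall lam u, dirichlet_eigenpair h a b lam u -> lambda1h h a b <= lam) /\
   (* simple: eigenspace spanned by phi1h *)
   (forall u, dirichlet_eigenpair h a b (lambda1h h a b) u ->
      exists c : R, forall x, (Omega_h h a b `|` bdry_h h a b) x ->
        u x = c * phi1h a b x)) /\
  (* (ii) *)
  (forall t : R, 0 < t ->
     \sum_(x \in Omega_h h a b) t * phi1h a b x * hvol h = 1 ->
     forall x, Omega_h h a b x ->
       2 ^+ n / box_vol a b ^+ 2 * dist_bdry h a b x ^+ n <= t * phi1h a b x).
Proof.
move=> n0 hpos ha hb hkl.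
exact: (@main_in _ _ _ _ _ _ _ hpos ha hb hkl n0).
Qed.
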